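(* For every integer $n\geq 2$, $$\frac{3}{2}\,WS(n-1) + 1 \leq WS^+(n) \leq WS(n).$$
   Context: A set $A \subseteq \mathbb{N}$ is sum-free if for all $(a,b)\in A^2$ (allowing $a=b$), $a+b \notin A$; it is weakly sum-free if for all $(a,b)\in A^2$ with $a\neq b$, $a+b\notin A$. $WS(n)$ is the largest $p$ such that $\{1,\dots,p\}$ can be partitioned into $n$ weakly sum-free subsets. For positive integers $a>b$, let $\pi(x) = (x \bmod a) + a\cdot \mathbb{1}_{\{0,\dots,b\}}(x \bmod a)$. For positive integers $a,n,b$ with $a>b$, a partition $(A_1,\dots,A_n)$ of $\{1,\dots,a+b\}$ is a $b$-WS-template with width $a$ and $n$ colors if: (i) every $A_i$ is weakly sum-free; (ii) every $A_i\setminus\{1,\dots,b\}$ is sum-free; (iii) for all $(x,y)\in A_n^2$, $x+y>b+2a$ implies $x+y-2a\notin A_n$; (iv) for all $i\in\{1,\dots,n-1\}$ and $(x,y)\in A_i^2$, $x+y>a+b$ implies $\pi(x+y)\notin A_i$. $WS^+_b(n)$ is the largest $a$ such that a $b$-WS-template with width $a$ and $n$ colors exists ($0$ if none), and $WS^+(n)=\max_{b\in\mathbb{N}^*} WS^+_b(n)$. *)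

(* Defs.v *)
From Stdlib Require Import Arith Lia ClassicalEpsilon.

(* [natmax P] is the largest natural number satisfying P, when such a
   largest element exists, and 0 otherwise. *)
Definition is_largest (P : nat -> Prop) (m : nat) : Prop :=
  P m /\ forall k, P k -> k <= m.

Definition natmax (P : nat -> Prop) : nat :=
  match excluded_middle_informative (exists m, is_largest P m) with
  | left h => proj1_sig (constructive_indefinite_description _ h)
  | right _ => 0
  end.

(* A partition (A_0,...,A_{n-1}) of {1,...,N} is encoded by a colouring
   c : nat -> nat with c x < n for 1 <= x <= N; A_i = {x in [1,N] | c x = i}. *)
Definition coloring (n N : nat) (c : nat -> nat) : Prop :=
  forall x, 1 <= x <= N -> c x < n.

Definition classes_weakly_sum_free (N : nat) (c : nat -> nat) : Prop :=
  forall x y, 1 <= x -> 1 <= y -> x <> y -> x + y <= N ->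
    c x = c y -> c (x + y) <> c x.

Definition WS_partitionable (n p : nat) : Prop :=
  exists c : nat -> nat, coloring n p c /\ classes_weakly_sum_free p c.

Definition WS (n : nat) : nat := natmax (WS_partitionable n).

Definition pi_ab (a b x : nat) : nat :=
  x mod a + (if x mod a <=? b then a else 0).

(* (A_1,...,A_n) with A_i = class of colour i-1; A_n = colour n-1. *)
Definition WS_template (b a n : nat) (c : nat -> nat) : Prop :=
  0 < b /\ b < a /\ 0 < n /\
  coloring n (a + b) c /\
  classes_weakly_sum_free (a + b) c /\
  (forall x y, b < x <= a + b -> b < y <= a + b -> x + y <= a + b ->
     c x = c y -> c (x + y) <> c x) /\
  (forall x y, 1 <= x <= a + b -> 1 <= y <= a + b ->
     c x = n - 1 -> c y = n - 1 -> x + y > b + 2 * a ->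
     c (x + y - 2 * a) <> n - 1) /\
  (forall i x y, i < n - 1 -> 1 <= x <= a + b -> 1 <= y <= a + b ->
     c x = i -> c y = i -> x + y > a + b ->
     c (pi_ab a b (x + y)) <> i).

Definition has_WS_template (b a n : nat) : Prop :=
  exists c : nat -> nat, WS_template b a n c.

Definition WSplus_b (b n : nat) : nat := natmax (fun a => has_WS_template b a n).

Definition WSplus (n : nat) : nat :=
  natmax (fun a => exists b, 0 < b /\ a = WSplus_b b n).

(* Main.v *)
Require Import Defs.
From Stdlib Require Import Arith.
From Stdlib Require Import Lia List ClassicalEpsilon.
Import ListNotations.

Lemma natmax_spec (P : nat -> Prop) :
  (exists m, is_largest P m) -> is_largest P (natmax P).
Proof.
  intros h. unfold natmax.
  destruct (excluded_middle_informative (exists m, is_largest P m)) as [h'|h'].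
  - destruct (constructive_indefinite_description _ h') as [m hm]. exact hm.
  - contradiction.
Qed.

Lemma natmax_cases (P : nat -> Prop) : natmax P = 0 \/ is_largest P (natmax P).
Proof.
  unfold natmax.
  destruct (excluded_middle_informative (exists m, is_largest P m)) as [h'|h'].
  - right. destruct (constructive_indefinite_description _ h') as [m hm]. exact hm.
  - left; reflexivity.
Qed.

Lemma largest_exists (P : nat -> Prop) : forall B p,
  (forall k, P k -> k <= B) -> P p -> exists m, is_largest P m.
Proof.
  induction B; intros p Hb Hp.
  - exists 0. assert (p = 0) by (apply Hb in Hp; lia). subst.
    split; auto.
  - destruct (excluded_middle_informative (P (S B))) as [h|h].
    + exists (S B). split; auto.
    + apply (IHB p); auto. intros k Hk.
      assert (k <= S B) by auto. destruct (Nat.eq_dec k (S B)); [subst; contradiction|lia].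
Qed.

Lemma len_split {A} (f : A -> nat) (m : nat) : forall L,
  (forall w, In w L -> f w < S m) ->
  length L = length (filter (fun w => f w <? m) L) + length (filter (fun w => f w =? m) L).
Proof.
  induction L as [|a L IH]; intros H; simpl; auto.
  assert (Ha : f a < S m) by (apply H; left; auto).
  rewrite IH by (intros; apply H; right; auto).
  destruct (Nat.ltb_spec (f a) m); destruct (Nat.eqb_spec (f a) m); simpl; lia.
Qed.

Lemma filter_filter_lt {A} (f : A -> nat) (m al : nat) : al < m -> forall L,
  filter (fun w => f w =? al) (filter (fun w => f w <? m) L) = filter (fun w => f w =? al) L.
Proof.
  intros Hal. induction L as [|a L IH]; simpl; auto.
  destruct (f a <? m) eqn:E1; simpl.
  - destruct (f a =? al); rewrite IH; auto.
  - apply Nat.ltb_ge in E1. destruct (f a =? al) eqn:E2.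
    + apply Nat.eqb_eq in E2. lia.
    + auto.
Qed.

Lemma pigeon {A} (f : A -> nat) : forall n (L : list A),
  (forall w, In w L -> f w < S n) ->
  exists al, al < S n /\ length L <= S n * length (filter (fun w => f w =? al) L).
Proof.
  induction n; intros L H.
  - exists 0. split; [lia|].
    pose proof (len_split f 0 L H).
    assert (filter (fun w => f w <? 0) L = []).
    { clear. induction L as [|x L IH]; simpl; auto. }
    rewrite H1 in H0. simpl in H0. lia.
  - pose proof (len_split f (S n) L H) as Hs.
    set (cn := length (filter (fun w => f w =? S n) L)) in *.
    destruct (le_lt_dec (length L) (S (S n) * cn)) as [h|h].
    + exists (S n). split; [lia|exact h].
    + destruct (IHn (filter (fun w => f w <? S n) L)) as [al [Hal Hl]].
      { intros w Hw. apply filter_In in Hw. destruct Hw as [_ Hw].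
        apply Nat.ltb_lt in Hw. exact Hw. }
      rewrite filter_filter_lt in Hl by exact Hal.
      exists al. split; [lia|].
      set (fa := length (filter (fun w => f w =? al) L)) in *.
      set (l' := length (filter (fun w => f w <? S n) L)) in *.
      nia.
Qed.

Fixpoint inc (S : list nat) : Prop :=
  match S with
  | [] => True
  | s :: S' => (forall w, In w S' -> s < w) /\ inc S'
  end.

Lemma inc_filter (p : nat -> bool) : forall S, inc S -> inc (filter p S).
Proof.
  induction S as [|s S IH]; simpl; auto. intros [H1 H2].
  destruct (p s); simpl; auto. split; auto.
  intros w Hw. apply filter_In in Hw. apply H1. tauto.
Qed.

Lemma inc_seq : forall len start, inc (seq start len).
Proof.
  induction len; intros start; simpl; auto. split; auto.
  intros w Hw. apply in_seq in Hw. lia.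
Qed.

Fixpoint cchain (c : nat -> nat) (L : list (nat * nat)) : Prop :=
  match L with
  | [] => True
  | p :: L' => (forall q, In q L' -> fst p < fst q /\ c (fst q - fst p) = snd p) /\ cchain c L'
  end.

Lemma cchain_filter (c : nat -> nat) (pr : nat * nat -> bool) : forall L,
  cchain c L -> cchain c (filter pr L).
Proof.
  induction L as [|a L IH]; simpl; auto. intros [H1 H2].
  destruct (pr a); simpl; auto. split; auto.
  intros q Hq. apply filter_In in Hq. apply H1. tauto.
Qed.

Fixpoint g (n k : nat) : nat :=
  match k with 0 => 0 | S k' => n * g n k' + 1 end.

Lemma chain_ex (c : nat -> nat) (n N : nat) (Hn : 1 <= n)
  (Hc : forall x, 1 <= x <= N -> c x < n) : forall k S,
  inc S -> (forall x, In x S -> x <= N) -> g n k <= length S ->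
  exists L, cchain c L /\ length L = k /\
    (forall p, In p L -> In (fst p) S /\ snd p < n).
Proof.
  induction k; intros S HS HN Hl.
  - exists []. simpl. repeat split; auto; contradiction.
  - destruct S as [|s S']; simpl in Hl; [lia|].
    destruct HS as [HS1 HS2].
    destruct n as [|n']; [lia|].
    destruct (pigeon (fun w => c (w - s)) n' S') as [al [Hal Hlen]].
    { intros w Hw. apply Hc. split.
      - pose proof (HS1 w Hw). lia.
      - pose proof (HN w (or_intror Hw)). lia. }
    set (F := filter (fun w => c (w - s) =? al) S') in *.
    destruct (IHk F) as [L' [H1 [H2 H3]]].
    + apply inc_filter; auto.
    + intros x Hx. apply filter_In in Hx. apply HN. right; tauto.
    + nia.
    + exists ((s, al) :: L'). simpl. split; [split|split].
      * intros q Hq. destruct (H3 q Hq) as [Hq1 _].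
        apply filter_In in Hq1. destruct Hq1 as [Hq1 Hq2].
        apply Nat.eqb_eq in Hq2. split; auto.
      * exact H1.
      * lia.
      * intros p [Hp|Hp].
        -- subst p. simpl. auto.
        -- destruct (H3 p Hp) as [Hp1 Hp2]. split; auto.
           right. apply filter_In in Hp1. tauto.
Qed.

Lemma WS_bounded (n : nat) : 1 <= n -> forall p, WS_partitionable n p -> p < g n (3 * n + 1).
Proof.
  intros Hn p [c [Hcol Hws]].
  destruct (Nat.lt_ge_cases p (g n (3 * n + 1))) as [h|h]; auto. exfalso.
  destruct (chain_ex c n p Hn Hcol (3 * n + 1) (seq 0 (S p))) as [L [HL1 [HL2 HL3]]].
  - apply inc_seq.
  - intros x Hx. apply in_seq in Hx. lia.
  - rewrite length_seq. lia.
  - destruct n as [|n']; [lia|].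
    destruct (pigeon (fun q : nat * nat => snd q) n' L) as [al [Hal Hlen]].
    { intros w Hw. apply (HL3 w Hw). }
    remember (filter (fun q : nat * nat => snd q =? al) L) as F eqn:HF.
    assert (HFc : cchain c F) by (subst F; apply cchain_filter; auto).
    assert (HFa : forall q, In q F -> snd q = al /\ fst q <= p).
    { intros q Hq. rewrite HF in Hq. apply filter_In in Hq. destruct Hq as [Hq1 Hq2].
      apply Nat.eqb_eq in Hq2. split; auto.
      destruct (HL3 q Hq1) as [Hq3 _]. apply in_seq in Hq3. lia. }
    assert (4 <= length F) by nia.
    destruct F as [|[u a1] [|[v a2] [|[w a3] [|[z a4] F']]]]; simpl in H; try lia.
    simpl in HFc.
    destruct HFc as [Hu [Hv [Hw _]]].
    destruct (Hu (v, a2) ltac:(simpl; auto)) as [Huv Cuv].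
    destruct (Hu (w, a3) ltac:(simpl; auto)) as [Huw Cuw].
    destruct (Hv (w, a3) ltac:(simpl; auto)) as [Hvw Cvw].
    destruct (Hv (z, a4) ltac:(simpl; auto)) as [Hvz Cvz].
    destruct (Hu (z, a4) ltac:(simpl; auto)) as [Huz Cuz].
    destruct (Hw (z, a4) ltac:(simpl; auto)) as [Hwz Cwz].
    simpl in *.
    destruct (HFa (u, a1) ltac:(simpl; auto)) as [E1 _].
    destruct (HFa (v, a2) ltac:(simpl; auto)) as [E2 _].
    destruct (HFa (w, a3) ltac:(simpl; auto)) as [E3 Bw].
    destruct (HFa (z, a4) ltac:(simpl; auto)) as [E4 Bz].
    simpl in *.
    destruct (Nat.eq_dec (v - u) (w - v)) as [e|e].
    + apply (Hws (v - u) (z - v)); try lia.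
      replace (v - u + (z - v)) with (z - u) by lia. congruence.
    + apply (Hws (v - u) (w - v)); try lia.
      replace (v - u + (w - v)) with (w - u) by lia. congruence.
Qed.

Lemma WS_largest (n : nat) : 1 <= n -> is_largest (WS_partitionable n) (WS n).
Proof.
  intros Hn. unfold WS. apply natmax_spec.
  apply (largest_exists _ (g n (3 * n + 1)) 0).
  - intros k Hk. apply WS_bounded in Hk; auto. lia.
  - exists (fun _ => 0). split.
    + intros x Hx. lia.
    + intros x y Hx Hy _ Hxy. lia.
Qed.

Lemma template_le (b a n : nat) : has_WS_template b a n -> a + b <= WS n.
Proof.
  intros [c Hc]. destruct Hc as [Hb [Hba [Hn [Hcol [Hws _]]]]].
  destruct (WS_largest n Hn) as [_ H]. apply H. exists c. auto.
Qed.

Lemma WSplus_b_le (b n : nat) : WSplus_b b n <= WS n.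
Proof.
  unfold WSplus_b.
  destruct (natmax_cases (fun a => has_WS_template b a n)) as [h|[h _]].
  - rewrite h. lia.
  - apply template_le in h. lia.
Qed.

Theorem proposition3p16 (n : nat) (hn : 2 <= n) :
  3 * WS (n - 1) + 2 <= 2 * WSplus n /\ WSplus n <= WS n.
Proof.
  split.
  - destruct (WS_largest (n - 1) ltac:(lia)) as [[c0 [Hcol0 Hws0]] Hmax].
    set (m := WS (n - 1)) in *.
    assert (Hm : 2 <= m).
    { apply Hmax. exists (fun _ => 0). split.
      - intros x Hx. lia.
      - intros x y Hx Hy Hne Hs. lia. }
    set (b := m / 2).
    assert (Hb : 1 <= b /\ 2 * b <= m /\ m < 2 * b + 2).
    { pose proof (Nat.div_mod_eq m 2). pose proof (Nat.mod_upper_bound m 2 ltac:(lia)).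
      unfold b. lia. }
    set (a := 2 * m + 1 - b).
    set (c := fun x => if x <=? m then c0 x else n - 1).
    assert (Hcl : forall x, 1 <= x <= m -> c x = c0 x /\ c0 x < n - 1).
    { intros x Hx. unfold c. destruct (x <=? m) eqn:E; [|apply Nat.leb_gt in E; lia].
      split; auto. }
    assert (Hch : forall x, m < x -> c x = n - 1).
    { intros x Hx. unfold c. destruct (x <=? m) eqn:E; [apply Nat.leb_le in E; lia|auto]. }
    assert (Hab : a + b = 2 * m + 1) by (unfold a; lia).
    assert (Ht : WS_template b a n c).
    { unfold WS_template. rewrite Hab.
      split; [lia|]. split; [unfold a; lia|]. split; [lia|].
      split.
      { intros x Hx. destruct (le_lt_dec x m) as [h|h].
        - destruct (Hcl x ltac:(lia)). lia.
        - rewrite Hch; lia. }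
      split.
      { intros x y Hx Hy Hne Hs Heq.
        destruct (le_lt_dec x m) as [hx|hx]; destruct (le_lt_dec y m) as [hy|hy].
        - destruct (Hcl x ltac:(lia)) as [ex lx]. destruct (Hcl y ltac:(lia)) as [ey ly].
          destruct (le_lt_dec (x + y) m) as [hs|hs].
          + destruct (Hcl (x + y) ltac:(lia)) as [es _].
            rewrite es, ex. rewrite ex, ey in Heq. apply Hws0; auto.
          + rewrite (Hch (x + y)) by lia. lia.
        - destruct (Hcl x ltac:(lia)) as [ex lx]. rewrite (Hch y) in Heq by lia. lia.
        - destruct (Hcl y ltac:(lia)) as [ey ly]. rewrite (Hch x) in Heq by lia. lia.
        - lia. }
      split.
      { intros x y Hx Hy Hs Heq.
        destruct (le_lt_dec x m) as [hx|hx]; destruct (le_lt_dec y m) as [hy|hy].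
        - destruct (Hcl x ltac:(lia)) as [ex lx].
          rewrite (Hch (x + y)) by lia. lia.
        - destruct (Hcl x ltac:(lia)) as [ex lx]. rewrite (Hch y) in Heq by lia. lia.
        - destruct (Hcl y ltac:(lia)) as [ey ly]. rewrite (Hch x) in Heq by lia. lia.
        - lia. }
      split.
      { intros x y Hx Hy Ex Ey Hs.
        assert (m < x). { destruct (le_lt_dec x m) as [h|h]; auto.
          destruct (Hcl x ltac:(lia)). lia. }
        assert (m < y). { destruct (le_lt_dec y m) as [h|h]; auto.
          destruct (Hcl y ltac:(lia)). lia. }
        destruct (Hcl (x + y - 2 * a)) as [e l]; [unfold a in *; lia|]. lia. }
      { intros i x y Hi Hx Hy Ex Ey Hs.
        assert (x <= m). { destruct (le_lt_dec x m) as [h|h]; auto.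
          rewrite Hch in Ex; lia. }
        assert (y <= m). { destruct (le_lt_dec y m) as [h|h]; auto.
          rewrite Hch in Ey; lia. }
        lia. } }
    assert (HWb : a <= WSplus_b b n).
    { unfold WSplus_b.
      destruct (natmax_spec (fun a0 => has_WS_template b a0 n)) as [_ H].
      - apply (largest_exists _ (WS n) a).
        + intros k Hk. apply template_le in Hk. lia.
        + exists c; exact Ht.
      - apply H. exists c; exact Ht. }
    assert (HW : WSplus_b b n <= WSplus n).
    { unfold WSplus.
      destruct (natmax_spec (fun a0 => exists b0, 0 < b0 /\ a0 = WSplus_b b0 n)) as [_ H].
      - apply (largest_exists _ (WS n) (WSplus_b b n)).
        + intros k [b0 [_ ->]]. apply WSplus_b_le.
        + exists b. split; [lia|auto].
      - apply H. exists b. split; [lia|auto]. }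
    unfold a in HWb. lia.
  - unfold WSplus.
    destruct (natmax_cases (fun a0 => exists b0, 0 < b0 /\ a0 = WSplus_b b0 n)) as [h|[[b0 [_ h]] _]].
    + rewrite h. lia.
    + rewrite h. apply WSplus_b_le.
Qed.
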